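(* Let $r\geq1$ and let $\mathbf a=(a_1,\ldots,a_r)$ be positive integers with $\gcd(a_1,\ldots,a_r)=1$, and let $D=\operatorname{lcm}(a_1,\ldots,a_r)$. Then the Frobenius number satisfies $$F(a_1,\ldots,a_r)\leq D(r-1)-a_1-\cdots-a_r.$$
   Context: The Frobenius number $F(a_1,\ldots,a_r)$ is the largest integer $n$ that cannot be written as $a_1x_1+\cdots+a_rx_r$ with integers $x_1,\ldots,x_r\geq 0$. *)

(* Defs.v *)
From mathcomp Require Import all_boot all_order all_algebra.
Set Implicit Arguments. Unset Strict Implicit. Unset Printing Implicit Defensive.
Import Order.TTheory GRing.Theory Num.Theory.
Local Open Scope ring_scope.

Definition representable (r : nat) (a : 'I_r -> nat) (n : int) : Prop :=
  exists x : 'I_r -> nat, n = ((\sum_(i < r) a i * x i)%N)%:Z.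

Definition is_frobenius_number (r : nat) (a : 'I_r -> nat) (F : int) : Prop :=
  ~ representable a F /\ forall n : int, F < n -> representable a n.

(* Main.v *)
Require Import Defs.
From Stdlib Require Classical_Prop Classical_Pred_Type.
From mathcomp Require Import all_boot all_order all_algebra zify ring.
Import Order.TTheory GRing.Theory Num.Theory.
Local Open Scope ring_scope.

Lemma bezout_big (r : nat) (a : 'I_r -> nat) :
  exists y : 'I_r -> int,
    \sum_(i < r) (a i)%:Z * y i = ((\big[gcdn/0%N]_(i < r) a i)%N)%:Z.
Proof.
elim: r a => [|r IH] a.
  by exists (fun _ => 0); rewrite !big_ord0.
have [y0 Hy0] := IH (fun i => a (lift ord0 i)).
have [u [v Huv]] := Bezoutz (a ord0)%:Z (\big[gcdn/0%N]_(i < r) a (lift ord0 i))%N%:Z.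
exists (fun i => if unlift ord0 i is Some j then v * y0 j else u).
rewrite !big_ord_recl /= unlift_none.
under eq_bigr => i _ do rewrite liftK.
rewrite (_ : Posz (gcdn _ _) = gcdz (a ord0) (\big[gcdn/0%N]_(i < r) a (lift ord0 i))) // -Huv -Hy0 mulr_sumr; congr (_ + _); first by rewrite mulrC.
by apply: eq_bigr => i _; rewrite mulrCA.
Qed.

Lemma dvd_lcm (r : nat) (a : 'I_r -> nat) i : (a i %| \big[lcmn/1%N]_(i < r) a i)%N.
Proof. exact: (biglcmn_sup i). Qed.

Lemma lcm_gt0 (r : nat) (a : 'I_r -> nat) : (forall i, (0 < a i)%N) ->
  (0 < \big[lcmn/1%N]_(i < r) a i)%N.
Proof.
move=> Ha; apply: (big_ind (fun x => 0 < x)%N) => //.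
by move=> x y Hx Hy; rewrite lcmn_gt0 Hx Hy.
Qed.

Lemma main_rep (r : nat) (a : 'I_r -> nat) (i0 : 'I_r) :
  (forall i, (0 < a i)%N) ->
  (\big[gcdn/0%N]_(i < r) a i)%N = 1%N ->
  forall n : int, ((\big[lcmn/1%N]_(i < r) a i)%N)%:Z * (r%:Z - 1)
         - ((\sum_(i < r) a i)%N)%:Z < n -> representable a n.
Proof.
move=> Ha Hg n Hn.
set D := (\big[lcmn/1%N]_(i < r) a i)%N in Hn *.
have D0 : (0 < D)%N by exact: (lcm_gt0 r a).
have [y Hy] := bezout_big r a.
rewrite Hg in Hy; have {}Hy : \sum_(i < r) (a i)%:Z * y i = 1 by rewrite Hy.
pose m i := (D %/ a i)%N.
have Hm i : (a i * m i = D)%N by rewrite /m mulnC divnK // dvd_lcm.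
have m0 i : (0 < m i)%N by move: (Hm i) D0 => <-; rewrite muln_gt0 => /andP[].
pose z i := ((n * y i) %% (m i)%:Z)%Z.
pose q i := ((n * y i) %/ (m i)%:Z)%Z.
have zge i : 0 <= z i by apply: modz_ge0; rewrite eqz_nat -lt0n.
have zlt i : z i < (m i)%:Z by apply: ltz_pmod; rewrite ltz_nat.
have Hsum : n = \sum_(i < r) (a i)%:Z * z i + D%:Z * \sum_(i < r) q i.
  rewrite -[n]mulr1 -Hy mulr_sumr mulr_sumr -big_split /=.
  apply: eq_bigr => i _.
  rewrite mulrCA (divz_eq (n * y i) (m i)%:Z) -/(z i) -/(q i) -(Hm i) PoszM.
  ring.
have Hbound : \sum_(i < r) (a i)%:Z * z i <= \sum_(i < r) (D%:Z - (a i)%:Z).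
  apply: ler_sum => i _.
  have := zlt i; have := Hm i; have := zge i; move: (z i) (m i) (a i) => Z M A.
  move=> Z0 HM ZM; rewrite -HM PoszM. nia.
rewrite sumrB sumr_const card_ord -(big_morph Posz PoszD (erefl 0%:Z)) in Hbound.
set Q := \sum_(i < r) q i in Hsum.
have Q0 : 0 <= Q.
  have : D%:Z * (r%:Z - 1) - (\sum_(i < r) a i)%N%:Z < n by [].
  move: Hbound Hsum; rewrite -mulr_natl.
  move: (\sum_(i < r) (a i)%:Z * z i) ((\sum_(i < r) a i)%N) => S A.
  move=> Hb ->. nia.
exists (fun i => `|z i|%N + (i == i0) * (`|Q|%N * m i))%N.
rewrite (big_morph Posz PoszD (erefl 0%:Z)) Hsum.
under eq_bigr => i _ do rewrite PoszM PoszD mulrDr.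
rewrite big_split /=; congr (_ + _).
  by apply: eq_bigr => i _; rewrite gez0_abs.
rewrite (bigD1 i0) //= eqxx big1 ?addr0.
  by rewrite mul1n !PoszM gez0_abs // mulrCA -PoszM Hm mulrC.
by move=> i /negbTE ->; rewrite mul0n mulr0.
Qed.

Lemma exists_max (P : int -> Prop) (B c : int) : ~ P c -> (forall n, B < n -> P n) ->
  exists F, ~ P F /\ forall n, F < n -> P n.
Proof.
move=> Pc HB.
have cB : c <= B.
  by rewrite leNgt; apply/negP => /HB.
suff : forall k : nat, forall c, ~ P c -> B - c <= k%:Z -> exists F, ~ P F /\ forall n, F < n -> P n.
  move/(_ `|B - c|%N c Pc); apply; rewrite gez0_abs ?subr_ge0 //.
elim => [|k IH] c' Pc' Hk.
  case: (Classical_Prop.classic (forall n, c' < n -> P n)) => H; first by exists c'.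
  have [n Hn] := Classical_Pred_Type.not_all_ex_not _ _ H.
  have [cn Pn] := Classical_Prop.imply_to_and _ _ Hn.
  have nB : n <= B by rewrite leNgt; apply/negP => /HB.
  exfalso; lia.
case: (Classical_Prop.classic (forall n, c' < n -> P n)) => H; first by exists c'.
have [n Hn] := Classical_Pred_Type.not_all_ex_not _ _ H.
have [cn Pn] := Classical_Prop.imply_to_and _ _ Hn.
apply: (IH n Pn); lia.
Qed.

Theorem proposition5p1 (r : nat) (a : 'I_r -> nat) :
  (1 <= r)%N ->
  (forall i, (0 < a i)%N) ->
  (\big[gcdn/0%N]_(i < r) a i)%N = 1%N ->
  exists F : int, is_frobenius_number a F /\
    F <= ((\big[lcmn/1%N]_(i < r) a i)%N)%:Z * (r%:Z - 1)
         - ((\sum_(i < r) a i)%N)%:Z.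
Proof.
move=> r1 Ha Hg.
have Hrep := main_rep r a (Ordinal r1) Ha Hg.
have Hneg : ~ representable a (-1).
  by case=> x Hx; move: (Hx); case: (\sum_(i < r) a i * x i)%N.
have [F [HF1 HF2]] := exists_max (representable a) _ _ Hneg Hrep.
exists F; split; first by [].
by rewrite leNgt; apply/negP => /Hrep.
Qed.
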